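(* Let $\alpha$ be an equidistributed infinite permutation with $p_{\alpha}(n)=n$ for all $n\ge1$. Then the underlying word $s$ of $\alpha$ is aperiodic (not ultimately periodic).
   Context: An infinite permutation is an equivalence class of sequences of pairwise distinct reals under $a\sim b\iff(a[i]<a[j]\Leftrightarrow b[i]<b[j]\ \forall i,j)$; write $\alpha=(\alpha[n])_{n\ge0}$ with the induced order. $p_\alpha(n)$ is the number of distinct factors $\alpha[i..i+n-1]$ of length $n$, each regarded as a finite permutation (relative order). A sequence $(a[n])$ in $[0,1]$ is equidistributed if $\lim_{n\to\infty}\frac{\#\{0\le i<n:a[i]<t\}}{n}=t$ for each $t\in[0,1]$; a permutation is equidistributed if it has an equidistributed representative in $[0,1]$. The underlying word of $\alpha$ is the infinite binary word $s$ with $s[i]=0$ if $\alpha[i]<\alpha[i+1]$ and $s[i]=1$ otherwise. An infinite word is ultimately periodic if it equals $vwww\cdots$ for finite words $v,w$ with $w$ nonempty. *)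

(* Defs.v *)
From HB Require Import structures.
From mathcomp Require Import all_boot all_order all_algebra.
From mathcomp Require Import all_classical all_reals topology normedtype sequences.
Set Implicit Arguments. Unset Strict Implicit. Unset Printing Implicit Defensive.
Import Order.TTheory GRing.Theory Num.Theory.
Local Open Scope ring_scope.
Local Open Scope classical_set_scope.
Import numFieldNormedType.Exports.

(* An infinite permutation alpha is given by a representative sequence
   a : nat -> R of pairwise distinct reals (R : realType). *)
Definition distinct_seq (R : realType) (a : nat -> R) : Prop := injective a.

(* a and b represent the same infinite permutation *)
Definition order_equiv (R : realType) (a b : nat -> R) : Prop :=
  forall i j : nat, (a i < a j) <-> (b i < b j).

(* The factor alpha[i..i+n-1], regarded as a finite permutation, i.e. as the
   relative order of its n entries: the relation (j,k) |-> a(i+j) < a(i+k). *)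
Definition factor_pattern (R : realType) (a : nat -> R) (i n : nat)
  : {ffun 'I_n * 'I_n -> bool} :=
  [ffun jk : 'I_n * 'I_n => a (i + jk.1)%N < a (i + jk.2)%N].

Definition complexity_is (R : realType) (a : nat -> R) (n k : nat) : Prop :=
  exists S : {set {ffun 'I_n * 'I_n -> bool}},
    (forall x, x \in S <-> exists i : nat, factor_pattern a i n = x)
    /\ #|S| = k.

Definition equidistributed_seq (R : realType) (a : nat -> R) : Prop :=
  (forall i, 0 <= a i <= 1) /\
  forall t : R, 0 <= t <= 1 ->
    (fun n : nat => ((count (fun i => a i < t) (iota 0 n))%:R / n%:R : R))
      @ \oo --> t.

Definition equidistributed_perm (R : realType) (a : nat -> R) : Prop :=
  exists b : nat -> R, distinct_seq b /\ order_equiv a b /\ equidistributed_seq b.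

(* underlying word: s[i] = 0 (false) if a i < a (i+1), 1 (true) otherwise *)
Definition underlying_word (R : realType) (a : nat -> R) : nat -> bool :=
  fun i => ~~ (a i < a i.+1).

(* s = v w w w ... with w nonempty *)
Definition ultimately_periodic (s : nat -> bool) : Prop :=
  exists v w : seq bool, w != [::] /\
    forall i : nat,
      s i = if (i < size v)%N then nth false v i
            else nth false w ((i - size v) %% size w)%N.

(* Main.v *)
Require Import Defs.
From mathcomp Require Import all_boot all_order all_algebra.
From mathcomp Require Import all_classical all_reals topology normedtype sequences.
From mathcomp Require Import lra zify.
Set Implicit Arguments. Unset Strict Implicit. Unset Printing Implicit Defensive.
Import Order.TTheory GRing.Theory Num.Theory.
Local Open Scope classical_set_scope.
Import numFieldNormedType.Exports.

Section Equi.
Local Open Scope ring_scope.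
Variable R : realType.

Lemma count_split (b : nat -> R) (t1 t2 : R) (s : seq nat) : t1 <= t2 ->
  (count (fun i => (b i < t2)%R) s =
  count (fun i => (b i < t1)%R) s + count (fun i => (t1 <= b i)%R && (b i < t2)%R) s)%N.
Proof.
move=> h; elim: s => //= x s ->.
case: (ltP (b x) t1) => hx /=.
  by rewrite (lt_le_trans hx h) /= addnA.
by case: (b x < t2); rewrite /= ?add0n ?addnA ?addn0 // (addnC 1%N).
Qed.

Lemma count_lb (P : pred nat) (i0 p K : nat) : (0 < p)%N ->
  (forall k, (K <= k)%N -> P (i0 + k * p)%N) ->
  forall M, (K <= M)%N -> (M - K <= count P (iota 0 (i0 + M * p)))%N.
Proof.
case: p => // p _ hP; elim=> [|M IH] hKM.
  by rewrite leqn0 in hKM; rewrite (eqP hKM).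
rewrite leq_eqVlt in hKM; case/orP: hKM => [/eqP <-|hKM]; first by rewrite subnn.
rewrite mulSn addnCA addnC iotaD count_cat add0n.
have := IH hKM => h /=.
have hKM' : (K <= M)%N by [].
rewrite hP // subSn //; lia.
Qed.

Lemma equi_interval (b : nat -> R) (p i0 K : nat) (t1 t2 : R) :
  equidistributed_seq b -> (0 < p)%N -> 0 <= t1 -> t1 <= t2 -> t2 <= 1 ->
  (2 * p)%:R * (t2 - t1) <= 1 ->
  (forall k, (K <= k)%N -> (t1 <= b (i0 + k * p)%N) && (b (i0 + k * p)%N < t2)) -> False.
Proof.
move=> [hb01 hcv] hp ht1 ht12 ht2 hw hin.
have pp : (0 < p%:R :> R) by rewrite ltr0n.
have he : (0 : R) < (8 * p)%:R^-1 by rewrite invr_gt0 ltr0n muln_gt0.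
have h1 : 0 <= t1 <= 1 by rewrite ht1 (le_trans ht12 ht2).
have h2 : 0 <= t2 <= 1 by rewrite ht2 (le_trans ht1 ht12).
have /cvgr_dist_lt /(_ _ he) [N1 _ HN1] := hcv t1 h1.
have /cvgr_dist_lt /(_ _ he) [N2 _ HN2] := hcv t2 h2.
set M := (4 * K + 3 * i0 + N1 + N2 + 1)%N.
set n := (i0 + M * p)%N.
have hMn : (M <= n)%N by exact: (leq_trans (leq_pmulr M hp) (leq_addl _ _)).
have hNM : (N1 <= M /\ N2 <= M /\ 4 * K + 3 * i0 <= M)%N by rewrite /M; lia.
have /= := HN1 n (leq_trans (proj1 hNM) hMn).
have /= := HN2 n (leq_trans (proj1 (proj2 hNM)) hMn).
rewrite (count_split _ _ ht12) natrD mulrDl.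
have hc := @count_lb (fun i => (t1 <= b i) && (b i < t2)) i0 p K hp hin M (ltac:(move: hNM; lia)).
rewrite -/n in hc.
set c := count _ (iota 0 n) in hc *.
set x1 := count _ (iota 0 n).
have hn : (0 < n)%N by rewrite /n; nia.
have hnat : (3 * n <= 4 * p * c)%N.
  have : (p * (4 * K + 3 * i0) <= p * M)%N by rewrite leq_mul2l (proj2 (proj2 hNM)) orbT.
  have : (4 * p * (M - K) <= 4 * p * c)%N by rewrite leq_mul2l hc orbT.
  have : (i0 <= p * i0)%N by rewrite leq_pmull.
  move: hNM; rewrite /n; nia.
have hreal : 3 * n%:R <= 4 * p%:R * c%:R :> R.
  by have := hnat; rewrite -(ler_nat R) !natrM.
have nR : (0 : R) < n%:R by rewrite ltr0n.
have e8 : (8 * p)%:R^-1 * (8 * p%:R) = 1 :> R.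
  by rewrite -[8 * p%:R]natrM mulVf // pnatr_eq0 muln_eq0 negb_or /= -lt0n hp.
rewrite natrM in hw.
set e := (8 * p)%:R^-1 in e8 he *.
set y := c%:R / n%:R.
have hy : y * n%:R = c%:R by rewrite /y divfK // gt_eqF.
rewrite -hy in hreal.
move: e8 hreal hw; move: (x1%:R / n%:R) => x; move: (p%:R) pp => q qp.
move=> e8 hreal hw.
rewrite !ltr_norml => /andP [a1 a2] /andP [a3 a4].
have : 3 <= 4 * q * y.
  by rewrite -(ler_pM2r nR); move: hreal; rewrite !mulrA.
have hy2 : y < t2 - t1 + 2 * e by lra.
rewrite -(ltr_pM2l qp) in hy2.
nra.
Qed.

Lemma mono_up (c : nat -> R) : (forall k, c k <= c k.+1) ->
  forall k d, c k <= c (k + d)%N.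
Proof.
move=> h k; elim=> [|d IH]; first by rewrite addn0.
by rewrite addnS (le_trans IH (h _)).
Qed.

Lemma equi_mono (b : nat -> R) (i0 p : nat) : equidistributed_seq b -> (0 < p)%N ->
  (forall k, b (i0 + k * p)%N < b (i0 + k.+1 * p)%N) \/
  (forall k, b (i0 + k.+1 * p)%N < b (i0 + k * p)%N) -> False.
Proof.
move=> heq hp.
have hb01 := heq.1.
have pp : (0 < p%:R :> R) by rewrite ltr0n.
have he : (0 : R) < (2 * p)%:R^-1 by rewrite invr_gt0 ltr0n muln_gt0.
have e2 : (2 * p)%:R * (2 * p)%:R^-1 = 1 :> R.
  by rewrite mulfV // pnatr_eq0 muln_eq0 negb_or /= -lt0n hp.
set eps := (2 * p)%:R^-1 in he e2.
pose c k := b (i0 + k * p)%N.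
have c01 : forall k, 0 <= c k <= 1 by move=> k; exact: hb01.
pose E := range c.
case=> hmon.
- have hup : forall k d, c k <= c (k + d)%N by apply: mono_up => k; exact: ltW (hmon k).
  have hsE : has_sup E.
    split; first by exists (c 0%N), 0%N.
    by exists 1 => _ [k _ <-]; case/andP: (c01 k).
  have [_ [K _ <-] hK] := sup_adherent he hsE.
  have hub := sup_upper_bound hsE.
  have cS : forall k, c k < sup E.
    by move=> k; apply: lt_le_trans (hmon k) _; apply: hub; exists k.+1.
  apply: (@equi_interval b p i0 K (Num.max 0 (sup E - eps)) (sup E) heq hp).
  + by rewrite le_max lexx.
  + rewrite ge_max gerBl (ltW he) andbT.
    by apply: le_trans (ltW (cS 0%N)); case/andP: (c01 0%N).
  + by apply: ge_sup; [exists (c 0%N), 0%N | move=> _ [k _ <-]; case/andP: (c01 k)].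
  + have : sup E - Num.max 0 (sup E - eps) <= eps.
      by rewrite lerBlDr -lerBlDl le_max lexx orbT.
    by move=> h; rewrite -[X in _ <= X]e2 ler_pM2l // ltr0n muln_gt0.
  + move=> k hk; rewrite ge_max cS andbT; apply/andP; split.
      by case/andP: (c01 k).
    rewrite -(subnKC hk); apply: le_trans (hup K _); exact: ltW.
- have hdn : forall k d, c (k + d)%N <= c k.
    move=> k; elim=> [|d IH]; first by rewrite addn0.
    by rewrite addnS (le_trans (ltW (hmon _)) IH).
  have hiE : has_inf E.
    split; first by exists (c 0%N), 0%N.
    by exists 0 => _ [k _ <-]; case/andP: (c01 k).
  have [_ [K _ <-] hK] := inf_adherent he hiE.
  have hlb := ge_inf hiE.2.
  have Ic : forall k, inf E <= c k by move=> k; apply: hlb; exists k.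
  have I0 : 0 <= inf E.
    by apply: lb_le_inf; [exists (c 0%N), 0%N | move=> _ [k _ <-]; case/andP: (c01 k)].
  apply: (@equi_interval b p i0 K.+1 (inf E) (Num.min 1 (inf E + eps)) heq hp) => //.
  + rewrite le_min lerDl (ltW he) andbT.
    by apply: le_trans (Ic 0%N) _; case/andP: (c01 0%N).
  + by rewrite ge_min lexx.
  + have : Num.min 1 (inf E + eps) - inf E <= eps.
      by rewrite lerBlDr addrC ge_min lexx orbT.
    by move=> h; rewrite -[X in _ <= X]e2 ler_pM2l // ltr0n muln_gt0.
  + move=> k hk; rewrite Ic /= lt_min; apply/andP; split.
      have hk1 : (1 <= k)%N by apply: leq_trans hk.
      rewrite -(subnKC hk1); apply: le_lt_trans (hdn 1%N _) _.
      apply: lt_le_trans (hmon 0%N) _; by case/andP: (c01 0%N).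
    rewrite -(subnKC hk); apply: le_lt_trans (hdn _ _) _.
    by apply: lt_trans (hmon K) _.
Qed.
End Equi.

Lemma per_mul (s : nat -> bool) (p N : nat) :
  (forall i, (N <= i)%N -> s (i + p)%N = s i) ->
  forall k i, (N <= i)%N -> s (i + k * p)%N = s i.
Proof.
move=> h; elim=> [|k IH] i hi; first by rewrite mul0n addn0.
rewrite mulSn addnCA [(p + _)%N]addnC h ?IH //.
exact: leq_trans hi (leq_addr _ _).
Qed.

Lemma window (s : nat -> bool) (p N : nat) : (0 < p)%N ->
  (forall i, (N <= i)%N -> s (i + p)%N = s i) ->
  (forall m, ((0 < m)%N /\ exists N', forall i, (N' <= i)%N -> s (i + m)%N = s i) -> (p <= m)%N) ->
  forall r r', (r < p)%N -> (r' < p)%N ->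
  (forall j, (j < p)%N -> s (N + r + j)%N = s (N + r' + j)%N) -> r = r'.
Proof.
move=> hp hN hmin.
have main : forall r r', (r < r')%N -> (r' < p)%N ->
    (forall j, (j < p)%N -> s (N + r + j)%N = s (N + r' + j)%N) -> False.
  move=> r r' hrr' hr' hj.
  have : (p <= r' - r)%N.
    apply: hmin; split; first by rewrite subn_gt0.
    exists (N + r)%N => i hi.
    set m := (i - (N + r))%N.
    have hi' : i = (N + r + m %% p + m %/ p * p)%N.
      by have := divn_eq m p; rewrite /m; lia.
    have hmp : (m %% p < p)%N by rewrite ltn_mod.
    rewrite hi' (per_mul hN) ?(leq_trans (leq_addr r N) (leq_addr _ _)) //.
    have -> : (N + r + m %% p + m %/ p * p + (r' - r) = N + r' + m %% p + m %/ p * p)%N by lia.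
    rewrite (per_mul hN) ?(leq_trans (leq_addr r' N) (leq_addr _ _)) //.
    by rewrite hj.
  lia.
move=> r r' hr hr' hj.
case: (ltngtP r r') => // h.
- by case: (main r r' h hr' hj).
- by case: (main r' r h hr (fun j hj' => esym (hj j hj'))).
Qed.

Lemma pat_word (R : realType) (a : nat -> R) (p i i' : nat) :
  factor_pattern a i p.+1 = factor_pattern a i' p.+1 ->
  forall j, (j < p)%N -> underlying_word a (i + j)%N = underlying_word a (i' + j)%N.
Proof.
move=> e j hj.
have := congr1 (fun f : {ffun 'I_p.+1 * 'I_p.+1 -> bool} =>
   f (Ordinal (leqW hj), Ordinal (hj : (j.+1 < p.+1)%N))) e.
by rewrite !ffunE /= /underlying_word -!addnS => ->.
Qed.

Lemma pat_sign (R : realType) (a : nat -> R) (p i i' : nat) :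
  factor_pattern a i p.+1 = factor_pattern a i' p.+1 ->
  (a i < a (i + p)%N)%R = (a i' < a (i' + p)%N)%R.
Proof.
move=> e.
have := congr1 (fun f : {ffun 'I_p.+1 * 'I_p.+1 -> bool} =>
   f (Ordinal (ltn0Sn p), ord_max)) e.
by rewrite !ffunE /= !addn0.
Qed.
Local Close Scope classical_set_scope.

Theorem proposition6 (R : realType) (a : nat -> R) :
  distinct_seq a ->
  equidistributed_perm a ->
  (forall n : nat, (1 <= n)%N -> complexity_is a n n) ->
  ~ ultimately_periodic (underlying_word a).
Proof.
move=> Hinj [b [Hbinj [Hord Hequi]]] Hcx [v [w [Hw Hs]]].
set s := underlying_word a.
have ex : exists p, (0 < p)%N /\ exists N, forall i, (N <= i)%N -> s (i + p)%N = s i.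
  exists (size w); split; first by rewrite lt0n size_eq0.
  exists (size v) => i hi; rewrite /s !Hs.
  rewrite ltnNge (leq_trans hi (leq_addr _ _)) ltnNge hi /=.
  by rewrite addnC -addnBA // modnDl.
have ex' : exists p, `[< (0 < p)%N /\ exists N, forall i, (N <= i)%N -> s (i + p)%N = s i >].
  by case: ex => p hp; exists p; apply/asboolP.
case: (ex_minnP ex') => p /asboolP [hp [N hN]] hmin'.
have hmin : forall m, ((0 < m)%N /\ exists N', forall i, (N' <= i)%N -> s (i + m)%N = s i) -> (p <= m)%N.
  by move=> m hm; apply: hmin'; apply/asboolP.
have cls : forall r k j, s (N + r + k * p + j)%N = s (N + r + j)%N.
  by move=> r k j; rewrite addnAC (per_mul hN) // -addnA leq_addr.
have same_cls : forall (r r' k k' : nat), (r < p)%N -> (r' < p)%N ->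
    factor_pattern a (N + r + k * p)%N p.+1 = factor_pattern a (N + r' + k' * p)%N p.+1 ->
    r = r'.
  move=> r r' k k' hr hr' e.
  apply: (window hp hN hmin hr hr') => j hj.
  by have := pat_word e hj; rewrite -/s !cls.
have key : exists r, (r < p)%N /\ forall k,
    (a (N + r + k * p)%N < a (N + r + k * p + p)%N)%R = (a (N + r)%N < a (N + r + p)%N)%R.
  case: (leqP p 1) => hp1.
    have ep : p = 1%N by apply/eqP; rewrite eqn_leq hp1 hp.
    exists 0%N; split; first by rewrite ep.
    have e1 : forall i, (a i < a (i + 1)%N)%R = ~~ s i.
      by move=> i; rewrite /s /underlying_word negbK addn1.
    move=> k; rewrite ep !e1; congr (~~ _).
    by have := cls 0%N k 0%N; rewrite !addn0 ep.
  apply: contrapT => hno.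
  have hg : forall r : 'I_p, exists k,
      (a (N + r + k * p)%N < a (N + r + k * p + p)%N)%R != (a (N + r)%N < a (N + r + p)%N)%R.
    move=> r; apply: contrapT => h; apply: hno; exists r; split => // k.
    apply/eqP; apply: contrapT => hk; apply: h; exists k; exact/negP.
  case: (boolp.choice hg) => g hgP.
  pose f (u : ('I_p + 'I_p)%type) := match u with
    | inl r => factor_pattern a (N + r + 0 * p)%N p.+1
    | inr r => factor_pattern a (N + r + g r * p)%N p.+1 end.
  have finj : injective f.
    move=> [r|r] [r'|r'] /= e.
    - by congr inl; apply: val_inj; apply: same_cls e.
    - have err := same_cls _ _ _ _ (ltn_ord r) (ltn_ord r') e.
      have er : r = r' by apply: val_inj.
      subst r'; have := pat_sign e; rewrite mul0n addn0 => hh.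
      by move: (hgP r); rewrite hh eqxx.
    - have err := same_cls _ _ _ _ (ltn_ord r) (ltn_ord r') e.
      have er : r = r' by apply: val_inj.
      subst r'; have := pat_sign e; rewrite mul0n addn0 => hh.
      by move: (hgP r); rewrite hh eqxx.
    - by congr inr; apply: val_inj; apply: same_cls e.
  have [S [HS HSc]] := Hcx p.+1 isT.
  have sub : f @: finset.setT \subset S.
    apply/fintype.subsetP => x /imsetP [u _ ->]; apply/HS.
    by case: u => r; eexists; reflexivity.
  have := subset_leq_card sub; rewrite card_imset // cardsT card_sum card_ord HSc.
  lia.
case: key => r [hr hconst].
have hb : forall i j, (a i < a j)%R = (b i < b j)%R.
  by move=> i j; apply/idP/idP => /Hord.
have hnext : forall k, (N + r + k.+1 * p = N + r + k * p + p)%N.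
  by move=> k; rewrite mulSn; lia.
apply: (@equi_mono R b (N + r)%N p Hequi hp).
case hs: (a (N + r)%N < a (N + r + p)%N)%R; [left|right] => k.
- rewrite hnext -hb; move: (hconst k); rewrite hs; exact: id.
- have hne : b (N + r + k * p)%N != b (N + r + k.+1 * p)%N.
    by apply/eqP => /Hbinj; rewrite hnext; lia.
  move: hne; rewrite neq_lt hnext -(hb (N + r + k * p)%N) (hconst k) hs /=.
  done.
Qed.
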